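(* Let $\mathcal{S}=[-\pi,\pi]$ with periodic identification of the endpoints. Let $\rho^{\mathrm d}:\mathcal{S}\times\mathbb{R}_{\ge0}\to\mathbb{R}_{\ge0}$ be smooth and periodic in $x$ with $\|\rho^{\mathrm d}(\cdot,t)\|_2\le M$ and $\|\rho^{\mathrm d}_x(\cdot,t)\|_2\le L$ for all $t\ge0$. Let $d:\mathcal{S}\times\mathbb{R}_{\ge0}\to\mathbb{R}$ satisfy $d(-\pi,t)=d(\pi,t)$ and $\|d(\cdot,t)\|_\infty\le D_1$, $\|d_x(\cdot,t)\|_\infty\le D_2$ for all $t\ge0$, with constants $D_1,D_2>0$. Let $K_{\mathrm p}>0$ and let $e$ be an $x$-periodic solution of $$e_t(x,t)=-K_{\mathrm p}e(x,t)+\big[(\rho^{\mathrm d}(x,t)-e(x,t))\,d(x,t)\big]_x.$$ Then for every $\kappa$ with $D_2<\kappa<+\infty$, if $2K_{\mathrm p}>\kappa$, the squared error norm $\|e(\cdot,t)\|_2^2$ remains bounded and $$\limsup_{t\to\infty}\|e(\cdot,t)\|_2\le\frac{2LD_1+2MD_2}{\kappa-D_2}.$$ In particular, the upper bound on the steady-state error can be made arbitrarily small by choosing $\kappa$ sufficiently large.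
   Context: Norms: $\|h(\cdot,t)\|_p=(\int_{\mathcal{S}}|h(x,t)|^p\,dx)^{1/p}$, $\|h(\cdot,t)\|_\infty=\operatorname{ess\,sup}_{\mathcal{S}}|h(x,t)|$. Subscripts $t,x$ denote partial derivatives. Background: this error equation arises for $e=\rho^{\mathrm d}-\rho$ when a multiagent density $\rho$ on the ring obeys $\rho_t+[\rho((f*\rho)+d)]_x=q$ with a velocity perturbation $d$ and control $q=K_{\mathrm p}e-[e(f*\rho^{\mathrm d})]_x-[\rho(f*e)]_x$, while $\rho^{\mathrm d}_t+[\rho^{\mathrm d}(f*\rho^{\mathrm d})]_x=0$; here $*$ is circular convolution on $\mathcal{S}$ and $f$ a periodic interaction kernel. *)

(* Defs.v *)
From Stdlib Require Import Reals Lra.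
From Coquelicot Require Import Coquelicot.
Open Scope R_scope.

(* Functions on the ring S = [-pi,pi] (endpoints identified) times time are
   modelled as f : R -> R -> R (f x t), 2*pi-periodic in the space variable x. *)
Definition periodic_x (f : R -> R -> R) : Prop :=
  forall x t, f (x + 2 * PI) t = f x t.

Definition partial_x (f : R -> R -> R) : R -> R -> R :=
  fun x t => Derive (fun y => f y t) x.
Definition partial_t (f : R -> R -> R) : R -> R -> R :=
  fun x t => Derive (fun s => f x s) t.

Fixpoint iter_partial (l : list bool) (f : R -> R -> R) : R -> R -> R :=
  match l with
  | nil => f
  | cons b l' => (if b then partial_x else partial_t) (iter_partial l' f)
  end.

Definition smooth_on (U : R -> R -> Prop) (f : R -> R -> R) : Prop :=
  forall (l : list bool) x t, U x t ->
    ex_derive (fun y => iter_partial l f y t) x /\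
    ex_derive (fun s => iter_partial l f x s) t /\
    continuous (fun p : R * R => iter_partial l f (fst p) (snd p)) (x, t).

Definition norm2 (h : R -> R) : R := sqrt (RInt (fun x => (h x) ^ 2) (- PI) PI).

Definition limsup_le (g : R -> R) (c : R) : Prop :=
  forall eps : R, 0 < eps -> exists T : R, forall t, T <= t -> g t <= c + eps.

(* Main.v *)
Require Import Defs.
From Stdlib Require Import Reals Lra Psatz.
From Coquelicot Require Import Coquelicot.
Open Scope R_scope.

Lemma cR_mult (f g : R -> R) x : continuous f x -> continuous g x -> continuous (fun y => f y * g y) x.
Proof. intros; apply (continuous_mult f g x); auto. Qed.
Lemma cR_plus (f g : R -> R) x : continuous f x -> continuous g x -> continuous (fun y => f y + g y) x.
Proof. intros; apply (continuous_plus f g x); auto. Qed.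
Lemma cR_minus (f g : R -> R) x : continuous f x -> continuous g x -> continuous (fun y => f y - g y) x.
Proof. intros; apply (continuous_minus f g x); auto. Qed.
Lemma cR_const (c x : R) : continuous (fun _ : R => c) x.
Proof. apply continuous_const. Qed.
Lemma cR_pow2 (f : R -> R) x : continuous f x -> continuous (fun y => f y ^ 2) x.
Proof. intros H. apply continuous_ext_loc with (fun y => f y * f y).
  apply filter_forall; intros y; change (@eq R (f y * f y) (f y ^ 2)); ring. apply cR_mult; auto. Qed.
Lemma cR_abs (f : R -> R) x : continuous f x -> continuous (fun y => Rabs (f y)) x.
Proof. apply continuous_Rabs_comp. Qed.

Lemma slice_x (F : R -> R -> R) x t :
  continuous (fun p : R * R => F (fst p) (snd p)) (x, t) -> continuous (fun y => F y t) x.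
Proof. intros H. apply (continuous_comp_2 (fun y : R => y) (fun _ : R => t) F x);
  [apply continuous_id | apply continuous_const | exact H]. Qed.

Lemma swap_cont (F : R -> R -> R) x t :
  continuous (fun p : R * R => F (fst p) (snd p)) (x, t) ->
  continuous (fun p : R * R => F (snd p) (fst p)) (t, x).
Proof. intros H. apply (continuous_comp_2 (@snd R R) (@fst R R) F (t, x));
  [apply continuous_snd | apply continuous_fst | exact H]. Qed.

Lemma within_to_loc (f : R * R -> R) p l (D : R * R -> Prop) :
  filterlim f (within D (locally p)) (locally l) -> locally p D ->
  filterlim f (locally p) (locally l).
Proof. intros H HD P HP. specialize (H P HP). unfold filtermap, within in H |- *.
  generalize (filter_and _ _ H HD). apply filter_imp. intros q [H1 H2]; auto. Qed.

Lemma loc_pos_snd (x t : R) : 0 < t -> locally (x, t) (fun p : R * R => 0 < snd p).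
Proof. intros Ht. exists (mkposreal t Ht). intros [y s] [_ Hs]. simpl in *.
  change (Rabs (s - t) < t) in Hs. apply Rabs_lt_between in Hs. lra. Qed.

Lemma loc_pos_fst (x t : R) : 0 < t -> locally (t, x) (fun p : R * R => 0 < fst p).
Proof. intros Ht. exists (mkposreal t Ht). intros [s y] [Hs _]. simpl in *.
  change (Rabs (s - t) < t) in Hs. apply Rabs_lt_between in Hs. lra. Qed.

Lemma loc_pos (t : R) : 0 < t -> locally t (fun s => 0 < s).
Proof. intros Ht. exists (mkposreal t Ht). intros s Hs. simpl in *.
  change (Rabs (s - t) < t) in Hs. apply Rabs_lt_between in Hs. lra. Qed.

Lemma cs_alg (I F G : R) : 0 <= F -> 0 <= G ->
  (forall th, 0 < th -> I <= th / 2 * F + G / (2 * th)) -> I <= sqrt F * sqrt G.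
Proof.
  intros HF HG H.
  assert (0 <= sqrt F * sqrt G) by (apply Rmult_le_pos; apply sqrt_pos).
  destruct (Rle_or_lt I 0) as [HI|HI]; [lra|].
  destruct HF as [HF|HF]; destruct HG as [HG|HG].
  - assert (sF := sqrt_lt_R0 F HF). assert (sG := sqrt_lt_R0 G HG).
    specialize (H (sqrt G / sqrt F) ltac:(apply Rdiv_lt_0_compat; auto)).
    rewrite <- (sqrt_sqrt F) in H at 2 by lra. rewrite <- (sqrt_sqrt G) in H at 2 by lra.
    replace (sqrt G / sqrt F / 2 * (sqrt F * sqrt F) + sqrt G * sqrt G / (2 * (sqrt G / sqrt F)))
      with (sqrt F * sqrt G) in H by (field; lra). exact H.
  - subst G. specialize (H (I / F) ltac:(apply Rdiv_lt_0_compat; auto)).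
    replace (I / F / 2 * F + 0 / (2 * (I / F))) with (I / 2) in H by (field; lra). lra.
  - subst F. specialize (H (G / I) ltac:(apply Rdiv_lt_0_compat; auto)).
    replace (G / I / 2 * 0 + G / (2 * (G / I))) with (I / 2) in H by (field; lra). lra.
  - subst. specialize (H 1 Rlt_0_1). lra.
Qed.

Lemma RInt_lin2 (f g : R -> R) a b : ex_RInt f a b -> ex_RInt g a b ->
  RInt (fun x => f x + g x) a b = RInt f a b + RInt g a b.
Proof. intros. exact (RInt_plus f g a b H H0). Qed.

Lemma RInt_lin3 (f1 f2 f3 : R -> R) c1 c2 c3 a b :
  ex_RInt f1 a b -> ex_RInt f2 a b -> ex_RInt f3 a b ->
  RInt (fun x => c1 * f1 x + c2 * f2 x + c3 * f3 x) a b
  = c1 * RInt f1 a b + c2 * RInt f2 a b + c3 * RInt f3 a b.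
Proof. intros H1 H2 H3.
  apply is_RInt_unique.
  exact (is_RInt_plus (fun x => c1 * f1 x + c2 * f2 x) (fun x => c3 * f3 x) a b _ _
   (is_RInt_plus (fun x => c1 * f1 x) (fun x => c2 * f2 x) a b _ _
      (is_RInt_scal f1 a b c1 _ (RInt_correct f1 a b H1))
      (is_RInt_scal f2 a b c2 _ (RInt_correct f2 a b H2)))
   (is_RInt_scal f3 a b c3 _ (RInt_correct f3 a b H3))).
Qed.

Lemma RInt_lin2c (f1 f2 : R -> R) c1 c2 a b :
  ex_RInt f1 a b -> ex_RInt f2 a b ->
  RInt (fun x => c1 * f1 x + c2 * f2 x) a b = c1 * RInt f1 a b + c2 * RInt f2 a b.
Proof. intros H1 H2.
  apply is_RInt_unique.
  exact (is_RInt_plus (fun x => c1 * f1 x) (fun x => c2 * f2 x) a b _ _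
      (is_RInt_scal f1 a b c1 _ (RInt_correct f1 a b H1))
      (is_RInt_scal f2 a b c2 _ (RInt_correct f2 a b H2))).
Qed.

Lemma RInt_nonneg (f : R -> R) a b : a <= b -> ex_RInt f a b ->
  (forall x, a < x < b -> 0 <= f x) -> 0 <= RInt f a b.
Proof. intros. apply RInt_ge_0; auto. Qed.

Lemma ex_cont (f : R -> R) a b : a <= b -> (forall x, a <= x <= b -> continuous f x) -> ex_RInt f a b.
Proof. intros Hab H. apply (ex_RInt_continuous (V := R_CompleteNormedModule)). rewrite Rmin_left, Rmax_right by lra. auto. Qed.

Lemma RInt_cs (f g : R -> R) a b : a <= b ->
  (forall x, a <= x <= b -> continuous f x) -> (forall x, a <= x <= b -> continuous g x) ->
  RInt (fun x => Rabs (f x) * Rabs (g x)) a b <=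
  sqrt (RInt (fun x => f x ^ 2) a b) * sqrt (RInt (fun x => g x ^ 2) a b).
Proof.
  intros Hab Hf Hg.
  assert (Ef : ex_RInt (fun x => f x ^ 2) a b) by (apply ex_cont; auto; intros; apply cR_pow2; auto).
  assert (Eg : ex_RInt (fun x => g x ^ 2) a b) by (apply ex_cont; auto; intros; apply cR_pow2; auto).
  apply cs_alg.
  - apply RInt_nonneg; auto. intros; apply pow2_ge_0.
  - apply RInt_nonneg; auto. intros; apply pow2_ge_0.
  - intros th Hth.
    replace (th / 2 * RInt (fun x => f x ^ 2) a b + RInt (fun x => g x ^ 2) a b / (2 * th))
      with (th / 2 * RInt (fun x => f x ^ 2) a b + / (2 * th) * RInt (fun x => g x ^ 2) a b) by (field; lra).
    rewrite <- (RInt_lin2c (fun x => f x ^ 2) (fun x => g x ^ 2)) by auto.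
    apply RInt_le; auto.
    + apply ex_cont; auto; intros; apply cR_mult; apply cR_abs; auto.
    + apply ex_cont; auto; intros; apply cR_plus; apply cR_mult; try apply cR_const; apply cR_pow2; auto.
    + intros x _.
      rewrite <- (pow2_abs (f x)), <- (pow2_abs (g x)).
      set (p := Rabs (f x)). set (q := Rabs (g x)).
      assert (0 <= (th * p - q) ^ 2) by apply pow2_ge_0.
      replace (th / 2 * p ^ 2 + / (2 * th) * q ^ 2) with (p * q + (th * p - q) ^ 2 / (2 * th)) by (field; lra).
      assert (0 <= (th * p - q) ^ 2 / (2 * th)) by (apply Rdiv_le_0_compat; lra). lra.
Qed.

Lemma is_derive_val (f : R -> R) x l l' : is_derive f x l -> l = l' -> is_derive f x l'.
Proof. intros H ->; exact H. Qed.

Lemma ode_bound (phi dphi : R -> R) (a K t0 : R) : 0 < a ->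
  (forall t, t0 <= t -> is_derive phi t (dphi t)) ->
  (forall t, t0 <= t -> dphi t <= - a * phi t + a * K) ->
  forall t, t0 <= t -> phi t <= K + exp (- a * (t - t0)) * (phi t0 - K).
Proof.
  intros Ha Hd Hi t Ht.
  destruct Ht as [Ht|Ht]; [|subst; replace (- a * (t - t)) with 0 by ring; rewrite exp_0; lra].
  set (w := fun s => exp (a * s) * (phi s - K)).
  set (dw := fun s => a * exp (a * s) * (phi s - K) + exp (a * s) * dphi s).
  assert (Hw : forall s, t0 <= s -> is_derive w s (dw s)).
  { intros s Hs. unfold w, dw.
    assert (H1 : is_derive (fun s => exp (a * s)) s (a * exp (a * s))).
    { auto_derive; [auto | ring]. }
    assert (H2 : is_derive (fun s => phi s - K) s (dphi s)).
    { generalize (is_derive_minus phi (fun _ => K) s (dphi s) zero (Hd s Hs) (is_derive_const K s)).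
      intros H; apply (is_derive_val _ _ _ _ H). change (@eq R (dphi s - 0) (dphi s)); ring. }
    exact (is_derive_mult _ _ _ _ _ H1 H2 Rmult_comm). }
  destruct (MVT_gen w t0 t dw) as [c [Hc Heq]].
  - intros x Hx. rewrite Rmin_left in Hx by lra. apply Hw. lra.
  - intros x Hx. rewrite Rmin_left, Rmax_right in Hx by lra.
    apply continuity_pt_filterlim. apply (ex_derive_continuous (K := R_AbsRing) (V := R_NormedModule) w). eexists; apply Hw; lra.
  - rewrite Rmin_left, Rmax_right in Hc by lra.
    assert (Hdc : dw c <= 0).
    { unfold dw. specialize (Hi c ltac:(lra)). assert (0 < exp (a * c)) by apply exp_pos.
      assert (0 <= exp (a * c) * (a * K - a * phi c - dphi c)) by (apply Rmult_le_pos; lra).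
      nra. }
    assert (Hwt : w t <= w t0) by nra.
    unfold w in Hwt.
    assert (Xp : 0 < exp (a * t)) by apply exp_pos.
    assert (Hx : exp (a * t0) = exp (- a * (t - t0)) * exp (a * t)).
    { rewrite <- exp_plus. f_equal. ring. }
    rewrite Hx in Hwt.
    assert (phi t - K <= exp (- a * (t - t0)) * (phi t0 - K)).
    { apply Rmult_le_reg_l with (exp (a * t)); auto. nra. }
    lra.
Qed.

Lemma cP_pow2 (f : R * R -> R) p : continuous f p -> continuous (fun y => f y ^ 2) p.
Proof. intros H. apply continuous_ext_loc with (fun y => f y * f y).
  apply filter_forall; intros y; change (@eq R (f y * f y) (f y ^ 2)); ring.
  apply (continuous_mult f f p); auto. Qed.

Lemma loc_abs (x : R) (P : R * R -> Prop) : locally (x, 0) P ->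
  locally (x, 0) (fun z : R * R => P (fst z, Rabs (snd z))).
Proof. intros [eps H]. exists eps. intros [y s] [H1 H2]. apply H. split; simpl in *; [exact H1|].
  change (Rabs (Rabs s - 0) < eps). change (Rabs (s - 0) < eps) in H2.
  rewrite Rminus_0_r in *. rewrite Rabs_Rabsolu. exact H2. Qed.

Lemma sqrt_sq_le (x : R) : sqrt x ^ 2 <= Rmax x 0.
Proof. destruct (Rle_or_lt 0 x) as [H|H].
  - rewrite pow2_sqrt by auto. apply Rmax_l.
  - rewrite sqrt_neg_0 by lra. simpl. rewrite Rmult_0_l. apply Rmax_r. Qed.

Ltac cont := repeat first [ apply cR_const | apply cR_plus | apply cR_minus | apply cR_mult
  | apply cR_pow2 | apply cR_abs ].

Theorem theorem2
  (rhod d e : R -> R -> R) (M L D1 D2 Kp : R)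
  (* desired density: smooth, nonnegative, periodic, with L^2 bounds *)
  (Hrho_smooth : smooth_on (fun _ t => 0 < t) rhod)
  (Hrho_nonneg : forall x t, 0 <= t -> 0 <= rhod x t)
  (Hrho_per : periodic_x rhod)
  (HM : forall t, 0 <= t -> norm2 (fun x => rhod x t) <= M)
  (HL : forall t, 0 <= t -> norm2 (fun x => partial_x rhod x t) <= L)
  (* perturbation d: periodic, C^1 in x, with sup bounds *)
  (Hd_per : periodic_x d)
  (Hd_dx : forall x t, 0 <= t -> ex_derive (fun y => d y t) x)
  (Hd_dx_cont : forall x t, 0 <= t -> continuous (fun y => partial_x d y t) x)
  (HD1pos : 0 < D1) (HD2pos : 0 < D2)
  (HD1 : forall x t, 0 <= t -> - PI <= x <= PI -> Rabs (d x t) <= D1)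
  (HD2 : forall x t, 0 <= t -> - PI <= x <= PI -> Rabs (partial_x d x t) <= D2)
  (HKp : 0 < Kp)
  (* e: x-periodic classical solution of the error equation *)
  (He_per : periodic_x e)
  (He_cont : forall x t, 0 <= t ->
     filterlim (fun p : R * R => e (fst p) (snd p))
       (within (fun p : R * R => 0 <= snd p) (locally (x, t))) (locally (e x t)))
  (He_dx : forall x t, 0 < t -> ex_derive (fun y => e y t) x)
  (He_dt : forall x t, 0 < t -> ex_derive (fun s => e x s) t)
  (He_dx_cont : forall x t, 0 < t ->
     continuous (fun p : R * R => partial_x e (fst p) (snd p)) (x, t))
  (He_dt_cont : forall x t, 0 < t ->
     continuous (fun p : R * R => partial_t e (fst p) (snd p)) (x, t))
  (He_pde : forall x t, 0 < t ->
     partial_t e x t =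
       - Kp * e x t + Derive (fun y => (rhod y t - e y t) * d y t) x) :
  forall kappa : R, D2 < kappa -> 2 * Kp > kappa ->
    (exists B : R, forall t, 0 <= t -> (norm2 (fun x => e x t)) ^ 2 <= B) /\
    limsup_le (fun t => norm2 (fun x => e x t))
      ((2 * L * D1 + 2 * M * D2) / (kappa - D2)).
Proof.
  intros kappa Hk1 Hk2.
  assert (PIpos := PI_RGT_0).
  assert (HL0 : 0 <= L).
  { apply Rle_trans with (norm2 (fun x => partial_x rhod x 0)); [apply sqrt_pos | apply HL; lra]. }
  assert (HM0 : 0 <= M).
  { apply Rle_trans with (norm2 (fun x => rhod x 0)); [apply sqrt_pos | apply HM; lra]. }
  set (E := fun s => RInt (fun x => e x s ^ 2) (-PI) PI).
  set (C := L * D1 + M * D2).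
  set (A := 2 * Kp - D2).
  assert (HC : 0 <= C) by (unfold C; nra).
  assert (HA : 0 < A) by (unfold A; lra).
  assert (Ce : forall x t, 0 < t -> continuous (fun p : R * R => e (fst p) (snd p)) (x, t)).
  { intros x t Ht. apply (within_to_loc _ _ _ (fun p : R * R => 0 <= snd p)).
    simpl. apply He_cont; lra.
    generalize (loc_pos_snd x t Ht). apply filter_imp. intros; lra. }
  assert (cu : forall x t, 0 < t -> continuous (fun y => e y t) x).
  { intros x t Ht. apply (ex_derive_continuous (K := R_AbsRing) (V := R_NormedModule)). apply He_dx; auto. }
  assert (cux : forall x t, 0 < t -> continuous (fun y => partial_x e y t) x).
  { intros x t Ht. apply slice_x. apply He_dx_cont; auto. }
  assert (cut : forall x t, 0 < t -> continuous (fun y => partial_t e y t) x).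
  { intros x t Ht. apply slice_x. apply He_dt_cont; auto. }
  assert (dr : forall x t, 0 < t -> ex_derive (fun y => rhod y t) x).
  { intros x t Ht. apply (Hrho_smooth nil x t Ht). }
  assert (cr : forall x t, 0 < t -> continuous (fun y => rhod y t) x).
  { intros x t Ht. apply (ex_derive_continuous (K := R_AbsRing) (V := R_NormedModule)). apply dr; auto. }
  assert (crx : forall x t, 0 < t -> continuous (fun y => partial_x rhod y t) x).
  { intros x t Ht. apply slice_x. apply (Hrho_smooth (cons true nil) x t Ht). }
  assert (cd : forall x t, 0 <= t -> continuous (fun y => d y t) x).
  { intros x t Ht. apply (ex_derive_continuous (K := R_AbsRing) (V := R_NormedModule)). apply Hd_dx; auto. }
  assert (cdx : forall x t, 0 <= t -> continuous (fun y => partial_x d y t) x).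
  { intros x t Ht. apply Hd_dx_cont; auto. }
  assert (HPI : -PI <= PI) by lra.
  assert (IE : forall t, 0 < t -> ex_RInt (fun x => e x t ^ 2) (-PI) PI).
  { intros t Ht. apply ex_cont; auto. intros; cont; auto. }
  assert (HE0 : forall t, 0 < t -> 0 <= E t).
  { intros t Ht. apply RInt_nonneg; auto. intros; apply pow2_ge_0. }
  assert (Hder : forall t, 0 < t -> is_derive E t (RInt (fun x => 2 * e x t * partial_t e x t) (-PI) PI)).
  { intros t Ht.
    assert (H := is_derive_RInt_param (fun s x => e x s ^ 2) (-PI) PI t).
    assert (Hloc : locally t (fun s => 0 < s)) by (apply loc_pos; auto).
    assert (Dv : forall x s, 0 < s -> Derive (fun z => e x z ^ 2) s = 2 * e x s * partial_t e x s).
    { intros x s Hs. apply is_derive_unique. auto_derive. apply He_dt; auto.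
      unfold partial_t. ring. }
    rewrite (RInt_ext _ (fun x => Derive (fun u => e x u ^ 2) t)) by (intros; rewrite Dv; auto).
    apply H.
    - generalize Hloc. apply filter_imp. intros s Hs x _. auto_derive. apply He_dt; auto.
    - intros x _. apply continuity_2d_pt_filterlim.
      change (continuous (fun z : R * R => Derive (fun w => e (snd z) w ^ 2) (fst z)) (t, x)).
      apply continuous_ext_loc with (fun z : R * R => 2 * e (snd z) (fst z) * partial_t e (snd z) (fst z)).
      + generalize (loc_pos_fst x t Ht). apply filter_imp. intros z Hz. rewrite Dv; auto.
      + apply (continuous_mult (fun z : R * R => 2 * e (snd z) (fst z)) (fun z : R * R => partial_t e (snd z) (fst z))).
        apply (continuous_mult (fun z : R * R => 2) (fun z : R * R => e (snd z) (fst z))).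
        apply continuous_const.
        apply (swap_cont e x t). apply Ce; auto.
        apply (swap_cont (partial_t e) x t). apply He_dt_cont; auto.
    - generalize Hloc. apply filter_imp. intros s Hs. apply IE; auto. }
  assert (Hineq : forall t, 0 < t ->
    RInt (fun x => 2 * e x t * partial_t e x t) (-PI) PI <= - A * E t + 2 * C * sqrt (E t)).
  { intros t Ht.
    assert (Hpde : forall x, partial_t e x t = - Kp * e x t + ((partial_x rhod x t - partial_x e x t) * d x t + (rhod x t - e x t) * partial_x d x t)).
    { intros x. rewrite He_pde by lra. f_equal.
      apply is_derive_unique. auto_derive.
      - split; [apply dr; exact Ht|]. split; [apply He_dx; exact Ht|]. split; [apply Hd_dx; lra| exact I].
      - unfold partial_x; ring. }
    assert (Hg : forall x, is_derive (fun y => e y t ^ 2 * d y t) x (2 * e x t * partial_x e x t * d x t + e x t ^ 2 * partial_x d x t)).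
    { intros x. auto_derive.
      - split; [apply He_dx; exact Ht|]. split; [apply Hd_dx; lra| exact I].
      - unfold partial_x; ring. }
    assert (Hg0 : RInt (fun x => 2 * e x t * partial_x e x t * d x t + e x t ^ 2 * partial_x d x t) (-PI) PI = 0).
    { assert (Hgc : forall x, Rmin (-PI) PI <= x <= Rmax (-PI) PI -> continuous (fun x => 2 * e x t * partial_x e x t * d x t + e x t ^ 2 * partial_x d x t) x).
      { intros x _. apply cR_plus.
        - apply cR_mult; [apply cR_mult; [apply cR_mult; [apply cR_const | apply cu; auto] | apply cux; auto] | apply cd; lra].
        - apply cR_mult; [apply cR_pow2; apply cu; auto | apply cdx; lra]. }
      rewrite (is_RInt_unique _ _ _ _ (is_RInt_derive (V := R_CompleteNormedModule) (fun y => e y t ^ 2 * d y t) _ (-PI) PI (fun x _ => Hg x) Hgc)).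
      change (e PI t ^ 2 * d PI t - e (-PI) t ^ 2 * d (-PI) t = 0).
      replace PI with (-PI + 2 * PI) at 1 2 by ring.
      rewrite He_per, Hd_per. ring. }
    assert (Hpw : forall x, -PI < x < PI ->
      2 * e x t * partial_t e x t + (2 * e x t * partial_x e x t * d x t + e x t ^ 2 * partial_x d x t)
      <= - A * e x t ^ 2 + 2 * D1 * (Rabs (e x t) * Rabs (partial_x rhod x t)) + 2 * D2 * (Rabs (e x t) * Rabs (rhod x t))).
    { intros x Hx. rewrite Hpde.
      assert (B1 : Rabs (d x t) <= D1) by (apply HD1; lra).
      assert (B2 : Rabs (partial_x d x t) <= D2) by (apply HD2; lra).
      assert (H1 : e x t * partial_x rhod x t * d x t <= Rabs (e x t) * Rabs (partial_x rhod x t) * D1).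
      { eapply Rle_trans; [apply Rle_abs|]. rewrite !Rabs_mult.
        apply Rmult_le_compat_l; [apply Rmult_le_pos; apply Rabs_pos | exact B1]. }
      assert (H2 : e x t * rhod x t * partial_x d x t <= Rabs (e x t) * Rabs (rhod x t) * D2).
      { eapply Rle_trans; [apply Rle_abs|]. rewrite !Rabs_mult.
        apply Rmult_le_compat_l; [apply Rmult_le_pos; apply Rabs_pos | exact B2]. }
      assert (H3 : - (e x t ^ 2 * partial_x d x t) <= e x t ^ 2 * D2).
      { assert (0 <= e x t ^ 2) by apply pow2_ge_0.
        assert (- partial_x d x t <= D2) by (apply Rabs_le_between in B2; lra). nra. }
      unfold A. lra. }
    assert (cg' : forall x, -PI <= x <= PI -> continuous (fun x => 2 * e x t * partial_x e x t * d x t + e x t ^ 2 * partial_x d x t) x).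
    { intros x Hx. apply cR_plus.
        - apply cR_mult; [apply cR_mult; [apply cR_mult; [apply cR_const | apply cu; auto] | apply cux; auto] | apply cd; lra].
        - apply cR_mult; [apply cR_pow2; apply cu; auto | apply cdx; lra]. }
    assert (ce2 : forall x, -PI <= x <= PI -> continuous (fun x => 2 * e x t * partial_t e x t) x).
    { intros x _. apply cR_mult; [apply cR_mult; [apply cR_const | apply cu; auto] | apply cut; auto]. }
    assert (I1 : RInt (fun x => Rabs (e x t) * Rabs (partial_x rhod x t)) (-PI) PI <= sqrt (E t) * L).
    { eapply Rle_trans.
      apply (RInt_cs (fun x => e x t) (fun x => partial_x rhod x t)); auto.
      apply Rmult_le_compat_l; [apply sqrt_pos|]. apply (HL t); lra. }
    assert (I2 : RInt (fun x => Rabs (e x t) * Rabs (rhod x t)) (-PI) PI <= sqrt (E t) * M).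
    { eapply Rle_trans.
      apply (RInt_cs (fun x => e x t) (fun x => rhod x t)); auto.
      apply Rmult_le_compat_l; [apply sqrt_pos|]. apply (HM t); lra. }
    assert (ex1 : ex_RInt (fun x => 2 * e x t * partial_t e x t) (-PI) PI) by (apply ex_cont; auto).
    assert (exg : ex_RInt (fun x => 2 * e x t * partial_x e x t * d x t + e x t ^ 2 * partial_x d x t) (-PI) PI) by (apply ex_cont; auto).
    assert (exa : ex_RInt (fun x => Rabs (e x t) * Rabs (partial_x rhod x t)) (-PI) PI).
    { apply ex_cont; auto. intros x _. apply cR_mult; apply cR_abs; auto. }
    assert (exb : ex_RInt (fun x => Rabs (e x t) * Rabs (rhod x t)) (-PI) PI).
    { apply ex_cont; auto. intros x _. apply cR_mult; apply cR_abs; auto. }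
    assert (Hle := RInt_le
      (fun x => 2 * e x t * partial_t e x t + (2 * e x t * partial_x e x t * d x t + e x t ^ 2 * partial_x d x t))
      (fun x => - A * e x t ^ 2 + 2 * D1 * (Rabs (e x t) * Rabs (partial_x rhod x t)) + 2 * D2 * (Rabs (e x t) * Rabs (rhod x t)))
      (-PI) PI HPI
      (ex_RInt_plus _ _ _ _ ex1 exg)
      (ex_RInt_plus _ _ _ _ (ex_RInt_plus _ _ _ _ (ex_RInt_scal _ _ _ (-A) (IE t Ht)) (ex_RInt_scal _ _ _ (2 * D1) exa)) (ex_RInt_scal _ _ _ (2 * D2) exb))
      Hpw).
    rewrite (RInt_lin2 (fun x => 2 * e x t * partial_t e x t) (fun x => 2 * e x t * partial_x e x t * d x t + e x t ^ 2 * partial_x d x t)) in Hle by auto.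
    rewrite (RInt_lin3 (fun x => e x t ^ 2) (fun x => Rabs (e x t) * Rabs (partial_x rhod x t)) (fun x => Rabs (e x t) * Rabs (rhod x t))) in Hle by auto.
    rewrite Hg0 in Hle. fold (E t) in Hle.
    assert (HCe : 2 * C * sqrt (E t) = 2 * D1 * (sqrt (E t) * L) + 2 * D2 * (sqrt (E t) * M)) by (unfold C; ring).
    rewrite HCe. nra. }
  set (a := A / 2). set (z := 2 * C / A). set (K := z ^ 2).
  assert (Ha : 0 < a) by (unfold a; lra).
  assert (Hz : 0 <= z) by (unfold z; apply Rdiv_le_0_compat; lra).
  assert (HK : 0 <= K) by (unfold K; apply pow2_ge_0).
  assert (Hode : forall t, 0 < t -> RInt (fun x => 2 * e x t * partial_t e x t) (-PI) PI <= - a * E t + a * K).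
  { intros t Ht. eapply Rle_trans; [apply Hineq; auto|].
    assert (Hy : E t = sqrt (E t) ^ 2) by (rewrite pow2_sqrt; auto).
    set (y := sqrt (E t)) in *. rewrite Hy.
    assert (HCz : C = A * z / 2) by (unfold z; field; lra).
    rewrite HCz. unfold a, K.
    assert (0 <= A / 2 * (y - z) ^ 2) by (apply Rmult_le_pos; [lra | apply pow2_ge_0]).
    nra. }
  assert (Hb : forall s t, 0 < s -> s <= t -> E t <= K + exp (- a * (t - s)) * (E s - K)).
  { intros s t Hs Hst. apply (ode_bound E (fun t => RInt (fun x => 2 * e x t * partial_t e x t) (-PI) PI) a K s); auto.
    - intros; apply Hder; lra.
    - intros; apply Hode; lra. }
  assert (Cf : forall x, continuous (fun p : R * R => e (fst p) (Rabs (snd p)) ^ 2) (x, 0)).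
  { intros x. apply cP_pow2.
    intros P HP. simpl in HP. rewrite Rabs_R0 in HP.
    assert (H := He_cont x 0 (Rle_refl 0) P HP).
    unfold filtermap, within in H |- *.
    generalize (loc_abs x _ H). apply filter_imp. intros p Hp. apply Hp. simpl. apply Rabs_pos. }
  assert (H0 : exists delta, 0 < delta /\ forall s, 0 < s <= delta -> E s <= E 0 + 2 * PI).
  { destruct (uniform_continuity_2d_1d (fun x s => e x (Rabs s) ^ 2) (-PI) PI 0
       (fun x _ => proj2 (continuity_2d_pt_filterlim _ x 0) (Cf x)) (mkposreal 1 Rlt_0_1)) as [del Hdel].
    exists del. split; [apply cond_pos|]. intros s Hs.
    assert (c0 : forall x, continuous (fun y => e y 0 ^ 2) x).
    { intros x. generalize (slice_x (fun x s => e x (Rabs s) ^ 2) x 0 (Cf x)).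
      rewrite Rabs_R0. auto. }
    assert (ex0 : ex_RInt (fun y => e y 0 ^ 2) (-PI) PI) by (apply ex_cont; auto).
    assert (Hs0 : 0 < s) by lra.
    apply Rle_trans with (RInt (fun y => e y 0 ^ 2 + 1) (-PI) PI).
    - apply RInt_le; auto.
      + apply ex_cont; auto. intros; apply cR_plus; auto; apply cR_const.
      + intros x Hx. specialize (Hdel x 0 x s ltac:(lra) ltac:(lra) ltac:(lra) ltac:(lra)
          ltac:(rewrite Rminus_diag, Rabs_R0; apply cond_pos)).
        simpl in Hdel. rewrite Rabs_R0, (Rabs_pos_eq s) in Hdel by lra.
        apply Rabs_lt_between in Hdel. lra.
    - rewrite (RInt_lin2 (fun y => e y 0 ^ 2) (fun _ => 1)); auto.
      + rewrite RInt_const. unfold E. change (scal (PI - - PI) 1) with ((PI - - PI) * 1). lra.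
      + apply ex_cont; auto. intros; apply cR_const. }
  assert (Hn : forall t, norm2 (fun x => e x t) = sqrt (E t)) by (intros; reflexivity).
  destruct H0 as [del [Hdel Hdel2]].
  split.
  - exists (K + Rabs (E 0) + 2 * PI). intros t Ht. rewrite Hn.
    eapply Rle_trans; [apply sqrt_sq_le|].
    assert (E t <= K + Rabs (E 0) + 2 * PI).
    { destruct Ht as [Ht|Ht].
      + set (s := Rmin t del).
        assert (Hs : 0 < s <= del) by (unfold s; split; [apply Rmin_pos; lra | apply Rmin_r]).
        assert (Hst : s <= t) by (unfold s; apply Rmin_l).
        assert (B1 := Hdel2 s Hs). assert (B2 := Hb s t ltac:(lra) Hst).
        assert (Hex : exp (- a * (t - s)) <= 1).
        { rewrite <- exp_0. destruct (Req_dec (- a * (t - s)) 0) as [Hq|Hq]; [rewrite Hq; lra|]. left. apply exp_increasing. nra. }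
        assert (0 < exp (- a * (t - s))) by apply exp_pos.
        assert (Rabs (E 0) >= E 0) by (apply Rle_ge, Rle_abs).
        assert (0 <= Rabs (E 0)) by apply Rabs_pos.
        destruct (Rle_or_lt (E s - K) 0) as [Hq|Hq].
        * assert (Hq2 : exp (- a * (t - s)) * (E s - K) <= exp (- a * (t - s)) * 0) by (apply Rmult_le_compat_l; lra). rewrite Rmult_0_r in Hq2. lra.
        * assert (exp (- a * (t - s)) * (E s - K) <= 1 * (E s - K)) by (apply Rmult_le_compat_r; lra). lra.
      + subst t. assert (Rabs (E 0) >= E 0) by (apply Rle_ge, Rle_abs). lra. }
    assert (0 <= Rabs (E 0)) by apply Rabs_pos.
    apply Rmax_lub; lra.
  - intros eps Heps.
    set (R0 := (2 * L * D1 + 2 * M * D2) / (kappa - D2) + eps).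
    assert (Hz1 : z <= (2 * L * D1 + 2 * M * D2) / (kappa - D2)).
    { unfold z. replace (2 * L * D1 + 2 * M * D2) with (2 * C) by (unfold C; ring).
      unfold Rdiv. apply Rmult_le_compat_l; [lra|]. apply Rinv_le_contravar; unfold A; lra. }
    assert (HR : z < R0) by (unfold R0; lra).
    assert (HKR : K < R0 ^ 2) by (unfold K; nra).
    set (T := 1 + Rabs (E 1) / (a * (R0 ^ 2 - K))).
    exists T. intros t Ht.
    assert (HT1 : 1 <= T) by (unfold T; assert (0 <= Rabs (E 1) / (a * (R0 ^ 2 - K))) by (apply Rdiv_le_0_compat; [apply Rabs_pos| nra]); lra).
    assert (B2 := Hb 1 t Rlt_0_1 ltac:(lra)).
    set (u := a * (t - 1)).
    assert (Hu : Rabs (E 1) <= (R0 ^ 2 - K) * u).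
    { unfold u. assert (Rabs (E 1) / (a * (R0 ^ 2 - K)) <= t - 1) by (unfold T in Ht; lra).
      apply Rmult_le_compat_l with (r := a * (R0 ^ 2 - K)) in H; [|nra].
      replace (a * (R0 ^ 2 - K) * (Rabs (E 1) / (a * (R0 ^ 2 - K)))) with (Rabs (E 1)) in H by (field; nra).
      nra. }
    assert (HX : 1 + u <= exp u) by apply exp_ineq1_le.
    assert (Hxx : exp (- a * (t - 1)) * exp u = 1).
    { rewrite <- exp_plus. unfold u. replace (- a * (t - 1) + a * (t - 1)) with 0 by ring. apply exp_0. }
    assert (Hpos : 0 < exp (- a * (t - 1))) by apply exp_pos.
    assert (H1 : exp (- a * (t - 1)) * (E 1 - K) <= exp (- a * (t - 1)) * Rabs (E 1)).
    { apply Rmult_le_compat_l; [lra|]. assert (E 1 <= Rabs (E 1)) by apply Rle_abs. lra. }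
    assert (H2 : exp (- a * (t - 1)) * Rabs (E 1) <= R0 ^ 2 - K).
    { assert (Rabs (E 1) <= (R0 ^ 2 - K) * exp u) by nra.
      apply Rmult_le_compat_l with (r := exp (- a * (t - 1))) in H; [|lra].
      replace (exp (- a * (t - 1)) * ((R0 ^ 2 - K) * exp u)) with ((R0 ^ 2 - K) * (exp (- a * (t - 1)) * exp u)) in H by ring.
      rewrite Hxx in H. lra. }
    assert (HEt : E t <= R0 ^ 2) by lra.
    cbv beta. rewrite Hn.
    assert (0 <= R0) by lra.
    rewrite <- (sqrt_pow2 R0) by auto. apply sqrt_le_1_alt. exact HEt.

Qed.
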